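(* For $a,b\in G$, the ideal $\{a^{-1}b^{-1}ab\}^\#$ of $\kappa G^\#$ equals the ideal generated by $\{[\vec a,\vec b]\cdot\vec c : \vec c\in\Lambda_G\}$.
   Context: Let $\kappa$ be a field of characteristic $0$ and $G$ a group. Let $*:\kappa G\to\kappa G$ be the $\kappa$-linear map with $g^*=g^{-1}$, $(\kappa G)^*$ its fixed points, and $A_G$ the quotient of $\kappa G$ by the two-sided ideal generated by all $ab-ba$, $a\in\kappa G$, $b\in(\kappa G)^*$; $*$ descends to $A_G$. $\kappa G^\#=\{x\in A_G:x^*=x\}$, $\Lambda_G=\{x\in A_G:x^*=-x\}$; group elements are identified with their images in $A_G$; $\bar x=\tfrac12(x+x^* )$, $\vec x=\tfrac12(x-x^* )$. For $\vec x,\vec y\in\Lambda_G$: $\vec x\cdot\vec y=-\tfrac12(\vec x\vec y+\vec y\vec x)$, $[\vec x,\vec y]=\tfrac12(\vec x\vec y-\vec y\vec x)$. For $L\subset G$, $L^\#$ is the ideal of $\kappa G^\#$ generated by $\{\overline{xl}-\bar x:x\in A_G,l\in L\}$. *)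

(* Defs.v *)
From HB Require Import structures.
From mathcomp Require Import all_boot all_order all_algebra.
Set Implicit Arguments. Unset Strict Implicit. Unset Printing Implicit Defensive.
Import GRing.Theory.
Local Open Scope ring_scope.

Definition ideal_gen (T : pzRingType) (P S : T -> Prop) (y : T) : Prop :=
  forall J : T -> Prop,
    (forall x, J x -> P x) ->
    J 0 ->
    (forall x z, J x -> J z -> J (x - z)) ->
    (forall r x, P r -> J x -> J (r * x) /\ J (x * r)) ->
    (forall x, S x -> J x) ->
    J y.

Section AG.
Variables (k : fieldType) (A : lalgType k) (starA : A -> A).

Definition half : k := (2%:R)^-1.
Definition bar (x : A) : A := half *: (x + starA x).
Definition vec (x : A) : A := half *: (x - starA x).
Definition vdot (x y : A) : A := - (half *: (x * y + y * x)).
Definition vbr (x y : A) : A := half *: (x * y - y * x).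

Definition kGsharp (y : A) : Prop := starA y = y.
Definition LambdaG (y : A) : Prop := starA y = - y.

(* generators of L^# for L ⊂ G, where emb : G -> A_G is the image of group
   elements:  { \bar{x l} - \bar x : x ∈ A_G, l ∈ L } *)
Definition Lsharp_gens (G : Type) (emb : G -> A) (L : G -> Prop) (y : A) : Prop :=
  exists (x : A) (l : G), L l /\ y = bar (x * emb l) - bar x.

Definition Lsharp (G : Type) (emb : G -> A) (L : G -> Prop) : A -> Prop :=
  ideal_gen kGsharp (Lsharp_gens emb L).

End AG.

(* Main.v *)
Require Import Defs.
From HB Require Import structures.
From mathcomp Require Import all_boot all_order all_algebra.
Import GRing.Theory.
Local Open Scope ring_scope.

Section Lin.
Variables (k : fieldType) (V W : lmodType k) (f : V -> W).
Hypothesis hf : forall c x y, f (c *: x + y) = c *: f x + f y.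
Lemma lin0 : f 0 = 0.
Proof.
have H := hf 1 0 0; rewrite scaler0 addr0 scale1r in H.
have : f 0 + 0 = f 0 + f 0 by rewrite addr0.
by move/addrI.
Qed.
Lemma linD x y : f (x + y) = f x + f y.
Proof. by rewrite -{1}[x]scale1r hf scale1r. Qed.
Lemma linZ c x : f (c *: x) = c *: f x.
Proof. by rewrite -[c *: x]addr0 hf lin0 addr0. Qed.
Lemma linN x : f (- x) = - f x.
Proof. by rewrite -scaleN1r linZ scaleN1r. Qed.
Lemma linB x y : f (x - y) = f x - f y.
Proof. by rewrite linD linN. Qed.
Lemma lin_sum n (F : 'I_n -> V) : f (\sum_(i < n) F i) = \sum_(i < n) f (F i).
Proof.
elim: n F => [|n IH] F; first by rewrite !big_ord0 lin0.
by rewrite !big_ord_recr /= linD IH.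
Qed.
End Lin.
Arguments lin0 {k V W f} hf.
Arguments linD {k V W f} hf x y.
Arguments linZ {k V W f} hf c x.
Arguments linN {k V W f} hf x.
Arguments linB {k V W f} hf x y.
Arguments lin_sum {k V W f} hf n F.

Section APart.
Variables (k : fieldType) (A : algType k) (st : A -> A).
Hypothesis h2 : (2%:R : k) != 0.
Hypothesis st_lin : forall c x y, st (c *: x + y) = c *: st x + st y.
Hypothesis st_inv : forall x, st (st x) = x.
Hypothesis st_mul : forall x y, st (x * y) = st y * st x.
Hypothesis st_cent : forall s x, st s = s -> s * x = x * s.

Lemma hh : (Defs.half k) + (Defs.half k) = 1 :> k.
Proof. by rewrite /Defs.half -mulr2n -[(_ ^-1) *+ 2]mulr_natr mulVf. Qed.

Lemma barvec x : bar st x + vec st x = x.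
Proof.
by rewrite /bar /vec -scalerDr addrACA subrr addr0 scalerDr -scalerDl hh scale1r.
Qed.
Lemma st_bar x : st (bar st x) = bar st x.
Proof. by rewrite /bar (linZ st_lin) (linD st_lin) st_inv addrC. Qed.
Lemma st_vec x : st (vec st x) = - vec st x.
Proof. by rewrite /vec (linZ st_lin) (linB st_lin) st_inv -scalerN opprB. Qed.
Lemma barB u v : bar st (u - v) = bar st u - bar st v.
Proof. by rewrite /bar (linB st_lin) -scalerBr; congr (_ *: _); rewrite opprD addrACA. Qed.

Definition cm (x y : A) := x * y - y * x.
Lemma cmDl x x' y : cm (x + x') y = cm x y + cm x' y.
Proof. by rewrite /cm mulrDl mulrDr opprD addrACA. Qed.
Lemma cmDr x y y' : cm x (y + y') = cm x y + cm x y'.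
Proof. by rewrite /cm mulrDl mulrDr opprD addrACA. Qed.
Lemma cm_centl s y : st s = s -> cm s y = 0.
Proof. by move=> Hs; rewrite /cm st_cent // subrr. Qed.
Lemma cm_centr s y : st s = s -> cm y s = 0.
Proof. by move=> Hs; rewrite /cm -(st_cent s y Hs) subrr. Qed.
Lemma cm_vec x y : cm x y = cm (vec st x) (vec st y).
Proof.
rewrite -{1}(barvec x) -{1}(barvec y) cmDl !cmDr.
rewrite !(cm_centl _ _ (st_bar x)) (cm_centr _ _ (st_bar y)).
by rewrite !add0r.
Qed.
Lemma st_cm x y : st (cm (vec st x) (vec st y)) = - cm (vec st x) (vec st y).
Proof. by rewrite /cm (linB st_lin) !st_mul !st_vec !mulrNN opprB. Qed.

Lemma A_equiv (G : Type) (emb : G -> A) (l0 : G) al be ai bi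
  (hai : ai * al = 1) (hia : al * ai = 1) (hbi : bi * be = 1) (hib : be * bi = 1)
  (hL : emb l0 = ai * bi * (al * be)) y :
  Lsharp st emb (fun l => l = l0) y <->
  ideal_gen (kGsharp st)
    (fun z => exists c : A, LambdaG st c /\
       z = vdot (vbr (vec st al) (vec st be)) c) y.
Proof.
set m := cm (vec st al) (vec st be).
have em : vbr (vec st al) (vec st be) = (Defs.half k) *: m by [].
have h2inv : (Defs.half k) * 2%:R = 1 :> k by rewrite /Defs.half mulVf.
split => H J HJP HJ0 HJB HJM HJS; apply: H => //.
- move=> z [x [l [-> ->]]]; rewrite hL -barB.
  set zz := x * ai * bi.
  have E : x * (ai * bi * (al * be)) - x = zz * cm al be.
    have hone : ai * bi * (be * al) = 1.
      by rewrite -mulrA (mulrA bi) hbi mul1r hai.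
    rewrite /cm /zz mulrBr -!mulrA.
    congr (_ - _).
    by rewrite [ai * _]mulrA hone mulr1.
  rewrite E cm_vec -/m.
  have -> : bar st (zz * m) = - vdot (vbr (vec st al) (vec st be)) (2%:R *: vec st zz).
    have ez : zz = bar st zz + vec st zz by rewrite barvec.
    have esz : st zz = bar st zz - vec st zz.
      by rewrite {1}ez (linD st_lin) st_bar st_vec.
    have hb := st_bar zz.
    rewrite em /vdot opprK /bar st_mul st_cm esz -/m.
    rewrite {1}ez.
    move: hb; move: (vec st zz) (bar st zz) => v b hb.
    clearbody m.
    congr (_ *: _).
    rewrite -!scalerAl -!scalerAr !scalerA h2inv (mulrC _ (Defs.half k)) h2inv !scale1r.
    rewrite mulrDl mulNr mulrBr opprB (st_cent _ _ hb).
    by rewrite [m * v - _]addrC addrACA subrr add0r addrC.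
  rewrite -sub0r; apply: HJB => //; apply: HJS; exists (2%:R *: vec st zz); split => //.
  by rewrite /LambdaG (linZ st_lin) st_vec scalerN.
- move=> z [c [Hc ->]]; apply: HJS.
  exists (- (c * ((Defs.half k) *: (be * al)))), l0; split => //.
  rewrite -barB hL.
  have E : - (c * ((Defs.half k) *: (be * al))) * (ai * bi * (al * be)) - - (c * ((Defs.half k) *: (be * al)))
     = - (c * ((Defs.half k) *: m)).
    have hone : be * al * (ai * bi) = 1.
      by rewrite -mulrA (mulrA al) hia mul1r hib.
    have eXL : c * ((Defs.half k) *: (be * al)) * (ai * bi * (al * be))
               = c * ((Defs.half k) *: (al * be)).
      by rewrite -mulrA -scalerAl [be * al * _]mulrA hone mul1r.
    rewrite mulNr opprK eXL /m -cm_vec /cm scalerBr mulrBr opprB addrC.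
    done.
  rewrite E em /vdot /bar (linN st_lin) st_mul (linZ st_lin) st_cm Hc -/m scalerN mulrNN.
  by rewrite -scalerN opprD addrC.
Qed.
End APart.

Theorem mainTheorem12
  (* κ : a field of characteristic 0 *)
  (k : fieldType) (hchar : [pchar k] =i pred0)
  (* G : a group (possibly infinite), with multiplication, inverse, unit *)
  (G : Type) (gmul : G -> G -> G) (ginv : G -> G) (g1 : G)
  (gassoc : forall x y z, gmul x (gmul y z) = gmul (gmul x y) z)
  (gid : forall x, gmul g1 x = x)
  (ginvl : forall x, gmul (ginv x) x = g1)
  (* κG : a κ-algebra R with a group homomorphism iota : G -> R whose image
     is a κ-basis of R *)
  (R : algType k) (iota : G -> R)
  (iota_mul : forall x y, iota (gmul x y) = iota x * iota y)
  (iota_one : iota g1 = 1)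
  (iota_free : forall (n : nat) (c : 'I_n -> k) (g : 'I_n -> G),
      injective g -> \sum_(i < n) c i *: iota (g i) = 0 -> forall i, c i = 0)
  (iota_span : forall r : R, exists (n : nat) (c : 'I_n -> k) (g : 'I_n -> G),
      r = \sum_(i < n) c i *: iota (g i))
  (* * : the κ-linear map on κG with g^* = g^{-1} *)
  (star : R -> R)
  (star_lin : forall (c : k) (x y : R), star (c *: x + y) = c *: star x + star y)
  (star_iota : forall g, star (iota g) = iota (ginv g))
  (* A_G : the quotient of κG by the two-sided ideal generated by
     { a b - b a : a ∈ κG, b ∈ (κG)^* }, given by the surjective algebra
     morphism pi : κG -> A_G with exactly this kernel *)
  (A : algType k) (pi : R -> A)
  (pi_lin : forall (c : k) (x y : R), pi (c *: x + y) = c *: pi x + pi y)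
  (pi_mul : forall x y, pi (x * y) = pi x * pi y)
  (pi_one : pi 1 = 1)
  (pi_surj : forall y : A, exists x : R, pi x = y)
  (pi_ker : forall x : R, pi x = 0 <->
      ideal_gen (fun _ => True)
        (fun z => exists u v : R, star v = v /\ z = u * v - v * u) x)
  (* the involution * descended to A_G *)
  (starA : A -> A) (starA_pi : forall x, starA (pi x) = pi (star x))
  (a b : G) :
  forall y : A,
    Lsharp starA (fun g => pi (iota g))
      (fun l => l = gmul (gmul (ginv a) (ginv b)) (gmul a b)) y
    <->
    ideal_gen (kGsharp starA)
      (fun z => exists c : A, LambdaG starA c /\
         z = vdot (vbr (vec starA (pi (iota a))) (vec starA (pi (iota b)))) c) y.
Proof.
move=> y.
have h2 : (2%:R : k) != 0.
  by apply/negP => /eqP H; have := hchar 2; rewrite !inE /= H eqxx.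
have hl : forall g, iota (ginv g) * iota g = 1.
  by move=> g; rewrite -iota_mul ginvl iota_one.
have hii : forall g, iota (ginv (ginv g)) = iota g.
  move=> g; symmetry.
  by rewrite -[iota g]mul1r -(hl (ginv g)) -mulrA hl mulr1.
have hr : forall g, iota g * iota (ginv g) = 1.
  by move=> g; rewrite -{1}hii hl.
have hinvmul : forall g h, iota (ginv (gmul g h)) = iota (ginv h) * iota (ginv g).
  move=> g h.
  have E1 : iota (gmul g h) * (iota (ginv h) * iota (ginv g)) = 1.
    by rewrite iota_mul -mulrA (mulrA (iota h)) hr mul1r hr.
  by rewrite -[LHS]mulr1 -E1 mulrA hl mul1r.
have star_inv : forall r, star (star r) = r.
  move=> r; case: (iota_span r) => n [c [g ->]].
  rewrite (lin_sum star_lin); under eq_bigr do rewrite (linZ star_lin) star_iota.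
  rewrite (lin_sum star_lin); under eq_bigr do rewrite (linZ star_lin) star_iota hii.
  by [].
have star_mul1 : forall g r, star (iota g * r) = star r * iota (ginv g).
  move=> g r; case: (iota_span r) => n [d [h ->]].
  rewrite mulr_sumr (lin_sum star_lin) (lin_sum star_lin) mulr_suml.
  apply: eq_bigr => i _.
  by rewrite -scalerAr !(linZ star_lin) -iota_mul !star_iota hinvmul -scalerAl.
have star_mul : forall x r, star (x * r) = star r * star x.
  move=> x r; case: (iota_span x) => n [c [g ->]].
  rewrite mulr_suml (lin_sum star_lin) (lin_sum star_lin) mulr_sumr.
  apply: eq_bigr => i _.
  by rewrite -scalerAl !(linZ star_lin) star_mul1 star_iota scalerAr.
have hhk : Defs.half k + Defs.half k = 1.
  by rewrite /Defs.half -mulr2n -[(_ ^-1) *+ 2]mulr_natr mulVf.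
have stA_lin : forall c x z, starA (c *: x + z) = c *: starA x + starA z.
  move=> c x z; case: (pi_surj x) => r <-; case: (pi_surj z) => q <-.
  by rewrite -pi_lin !starA_pi star_lin pi_lin.
have stA_inv : forall x, starA (starA x) = x.
  by move=> x; case: (pi_surj x) => r <-; rewrite !starA_pi star_inv.
have stA_mul : forall x z, starA (x * z) = starA z * starA x.
  move=> x z; case: (pi_surj x) => r <-; case: (pi_surj z) => q <-.
  by rewrite -pi_mul !starA_pi star_mul pi_mul.
have stA_cent : forall s x, starA s = s -> s * x = x * s.
  move=> s x; case: (pi_surj s) => r <-; case: (pi_surj x) => q <- Hs.
  pose v := Defs.half k *: (r + star r).
  have ev : pi v = pi r.
    rewrite /v (linZ pi_lin) (linD pi_lin) -starA_pi Hs.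
    by rewrite scalerDr -scalerDl hhk scale1r.
  have sv : star v = v.
    by rewrite /v (linZ star_lin) (linD star_lin) star_inv addrC.
  have H0 : pi (q * v - v * q) = 0.
    apply/pi_ker => J _ _ _ _ HS; apply: HS; by exists q, v.
  rewrite (linB pi_lin) !pi_mul ev in H0.
  by apply/eqP; rewrite eq_sym -subr_eq0 H0.
have hone : forall g, pi (iota (ginv g)) * pi (iota g) = 1.
  by move=> g; rewrite -pi_mul hl pi_one.
have hone' : forall g, pi (iota g) * pi (iota (ginv g)) = 1.
  by move=> g; rewrite -pi_mul hr pi_one.
apply: (@A_equiv k A starA h2 stA_lin stA_inv stA_mul stA_cent G (fun g => pi (iota g)) _ _ _ _ _ (hone a) (hone' a) (hone b) (hone' b)).
by rewrite !iota_mul !pi_mul.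
Qed.
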